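(* Let $n\ge 1$ and $m\ge 1$. For any $\textsc{P}$-layers $L_1,\dots,L_m$ and any $\textsc{C}$-layers $C_1,\dots,C_m$ on $n$ qubits, there exist a $\textsc{P}$-layer $L'$, a $\textsc{CZ}$-layer $Z'$ and a $\textsc{C}$-layer $C'$ on $n$ qubits such that $$C_m L_m C_{m-1}L_{m-1}\cdots C_1 L_1 \;=\; C'\,Z'\,L'$$ as exact unitary matrices. In stage notation: $(\text{-P-C-})^m = \text{-P-CZ-C-}$.
   Context: Gates: $\textsc{H}=\frac{1}{\sqrt2}\begin{pmatrix}1&1\\1&-1\end{pmatrix}$, $\textsc{P}=\mathrm{diag}(1,i)$, $\textsc{CNOT}|a,b\rangle=|a,a\oplus b\rangle$, $\textsc{CZ}|a,b\rangle=(-1)^{ab}|a,b\rangle$. Layers on $n$ qubits: an $\textsc{H}$-layer is $\bigotimes_{j=1}^n \textsc{H}^{b_j}$ with $b_j\in\{0,1\}$; a $\textsc{P}$-layer is $\bigotimes_{j=1}^n \textsc{P}^{a_j}$ with $a_j\in\{0,1,2,3\}$; a $\textsc{C}$-layer is any unitary implemented by a circuit of $\textsc{CNOT}$ gates (equivalently $|x\rangle\mapsto|Ax\rangle$ for an invertible $n\times n$ matrix $A$ over $\mathbb F_2$); a $\textsc{CZ}$-layer is any product of $\textsc{CZ}$ gates (acting on arbitrary pairs of the $n$ qubits). Stage notation such as -X-Y-Z- denotes a circuit in which stage X is applied first, then Y, then Z, i.e. the operator product $ZYX$. *)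

(* Defs.v *)
From HB Require Import structures.
From mathcomp Require Import all_boot all_order all_algebra algC.
Set Implicit Arguments. Unset Strict Implicit. Unset Printing Implicit Defensive.
Import Order.TTheory GRing.Theory Num.Theory.
Local Open Scope ring_scope.

(* Computational basis states of n qubits: bit vectors x in F_2^n (columns);
   bit j of x is x j 0. *)
Definition basis (n : nat) := 'cV['F_2]_n.

(* An operator on n qubits, given by its matrix entries <x|U|y> over the
   complex algebraic numbers algC. *)
Definition qop (n : nat) := basis n -> basis n -> algC.

Definition qmul (n : nat) (U V : qop n) : qop n :=
  fun x y => \sum_(z : basis n) U x z * V z y.

Definition qid (n : nat) : qop n := fun x y => (x == y)%:R.

Definition bitn (n : nat) (x : basis n) (j : 'I_n) : nat := (x j ord0 != 0%R)%N.

(* P-layer  \bigotimes_j P^{a_j},  P = diag(1, i), a_j in {0,1,2,3}. *)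
Definition Player (n : nat) (a : 'I_n -> 'I_4) : qop n :=
  fun x y => (x == y)%:R * \prod_(j < n) 'i ^+ (a j * bitn x j)%N.

(* C-layer  |y> |-> |A y>  for an invertible A over F_2. *)
Definition Clayer (n : nat) (A : 'M['F_2]_n) : qop n :=
  fun x y => (x == A *m y)%:R.

Definition CZgate (n : nat) (j k : 'I_n) : qop n :=
  fun x y => (x == y)%:R * (-1) ^+ (bitn x j * bitn x k)%N.

Definition CZlayer (n : nat) (s : seq ('I_n * 'I_n)) : qop n :=
  foldr (fun p U => qmul (CZgate p.1 p.2) U) (@qid n) s.

(* C_{k-1} L_{k-1} ... C_0 L_0  (layers indexed from 0). *)
Fixpoint PCcircuit (n : nat) (L : nat -> 'I_n -> 'I_4)
    (A : nat -> 'M['F_2]_n) (k : nat) : qop n :=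
  match k with
  | 0 => @qid n
  | k'.+1 => qmul (Clayer (A k')) (qmul (Player (L k')) (PCcircuit L A k'))
  end.

(* Main.v *)
Require Import Defs.
From HB Require Import structures.
From mathcomp Require Import all_boot all_order all_algebra algC.
From mathcomp Require Import ring.
Import Order.TTheory GRing.Theory Num.Theory.
Local Open Scope ring_scope.

Lemma F2_cases (u : 'F_2) : u = 0 \/ u = 1.
Proof. case: u => [[|[|k]] Hk]; [left; exact: val_inj | right; exact: val_inj | done]. Qed.

Lemma F2_11 : (1 + 1 : 'F_2) = 0. Proof. by apply/eqP. Qed.

Definition Pph (n : nat) (a : 'I_n -> 'I_4) (y : basis n) : algC :=
  \prod_(j < n) 'i ^+ (a j * bitn y j)%N.
Definition CZph (n : nat) (s : seq ('I_n * 'I_n)) (y : basis n) : algC :=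
  \prod_(p <- s) (-1) ^+ (bitn y p.1 * bitn y p.2)%N.

Definition nb (u : 'F_2) : nat := (u != 0).

Definition good (n : nat) (g : basis n -> algC) :=
  exists (a : 'I_n -> 'I_4) (s : seq ('I_n * 'I_n)), all (fun p : 'I_n * 'I_n => p.1 != p.2) s /\
    forall y, g y = @Pph n a y * @CZph n s y.
Arguments good {n}.
Arguments Pph {n}.
Arguments CZph {n}.

Lemma good_ext {n} {f g : basis n -> algC} :
  good f -> (forall y, f y = g y) -> good g.
Proof. move=> [a [s [hs h]]] e; exists a, s; split => // y; by rewrite -e. Qed.

Lemma good1 {n} : good (fun _ : basis n => 1).
Proof.
exists (fun _ => ord0), [::]; split => // y.
by rewrite /Pph /CZph big_nil mulr1 big1 // => j _; rewrite mul0n expr0.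
Qed.

Lemma i4 : 'i ^+ 4 = 1 :> algC.
Proof. by rewrite (_ : 4 = 2 * 2)%N // exprM sqrCi sqrrN expr1n. Qed.

Lemma imod (k : nat) (b : bool) : 'i ^+ (k %% 4 * b) = 'i ^+ (k * b) :> algC.
Proof.
case: b; rewrite ?muln0 ?muln1 //.
by rewrite {2}(divn_eq k 4) exprD mulnC exprM i4 expr1n mul1r.
Qed.

Lemma good_mul {n} {f g : basis n -> algC} :
  good f -> good g -> good (fun y => f y * g y).
Proof.
move=> [a1 [s1 [h1 e1]]] [a2 [s2 [h2 e2]]].
exists (fun j => Ordinal (ltn_pmod (a1 j + a2 j) (isT : (0 < 4)%N))), (s1 ++ s2).
split; first by rewrite all_cat h1 h2.
move=> y; rewrite e1 e2 /Pph /CZph big_cat /=.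
rewrite mulrACA; congr (_ * _).
rewrite -big_split /=; apply: eq_bigr => j _.
by rewrite /bitn imod -exprD mulnDl.
Qed.

Lemma good_exp {n} {f : basis n -> algC} k : good f -> good (fun y => f y ^+ k).
Proof.
move=> gf; elim: k => [|k IH].
  apply: (good_ext good1). move=> y. by rewrite expr0.
by apply: (good_ext (good_mul gf IH)) => y; rewrite exprS.
Qed.

Lemma good_prod {n} (I : Type) (r : seq I) (F : I -> basis n -> algC) :
  (forall i, good (F i)) -> good (fun y => \prod_(i <- r) F i y).
Proof.
move=> gF; elim: r => [|i r IH].
  by apply: (good_ext good1) => y; rewrite big_nil.
by apply: (good_ext (good_mul (gF i) IH)) => y; rewrite big_cons.
Qed.

Lemma good_G2 {n} (l : 'I_n) (c : 'I_4) : good (fun y : basis n => 'i ^+ (c * bitn y l)%N).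
Proof.
exists (fun j => if j == l then c else ord0), [::]; split => // y.
rewrite /CZph big_nil mulr1 /Pph (bigD1 l) //= eqxx big1 ?mulr1 // => j /negbTE ->.
by rewrite mul0n expr0.
Qed.

Lemma good_G3 {n} (l l' : 'I_n) :
  good (fun y : basis n => (-1) ^+ (bitn y l' * bitn y l)%N).
Proof.
case: (eqVneq l' l) => [->|ne].
  apply: (good_ext (good_G2 l (@Ordinal 4 2 isT))) => y /=.
  by rewrite /bitn; case: (y l ord0 != 0) => //=; rewrite expr1 sqrCi.
exists (fun _ => ord0), [:: (l', l)]; split; first by rewrite /= ne.
move=> y; rewrite /CZph big_cons big_nil mulr1 /Pph big1 ?mul1r // => j _;
  by rewrite mul0n expr0.
Qed.

Lemma good_L1 {n} (m : 'I_n -> 'F_2) (l : 'I_n) (r : seq 'I_n) :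
  good (fun y : basis n =>
    (-1) ^+ (nb (\sum_(l' <- r) m l' * y l' ord0)%R * bitn y l)%N).
Proof.
elim: r => [|l' r IH].
  by apply: (good_ext good1) => y; rewrite big_nil /nb eqxx mul0n expr0.
have split_id : forall (t u : 'F_2) (b : nat),
    (-1) ^+ (nb (t + u)%R * b)%N
    = (-1) ^+ (nb t * b)%N * (-1) ^+ (nb u * b)%N :> algC.
  move=> t u b; case: (F2_cases t) => ->; case: (F2_cases u) => ->;
    rewrite /nb ?addr0 ?add0r ?F2_11 ?eqxx /= ?mul0n ?mul1n ?expr0 ?mul1r ?mulr1 //.
  by rewrite -expr2 sqrr_sign.
case: (F2_cases (m l')) => hm.
  apply: (good_ext IH) => y. rewrite big_cons hm mul0r add0r. done.
have gl := good_G3 l l'.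
apply: (good_ext (good_mul gl IH)) => y.
by rewrite big_cons hm mul1r split_id.
Qed.

Lemma good_L2 {n} (m : 'I_n -> 'F_2) (c : 'I_4) (r : seq 'I_n) :
  good (fun y : basis n =>
    'i ^+ (c * nb (\sum_(l' <- r) m l' * y l' ord0)%R)%N).
Proof.
elim: r => [|l r IH].
  by apply: (good_ext good1) => y; rewrite big_nil /nb eqxx muln0 expr0.
have split_id : forall (t u : 'F_2) (c : nat),
    'i ^+ (c * nb (t + u)%R)%N
    = 'i ^+ (c * nb t)%N * 'i ^+ (c * nb u)%N
      * ((-1) ^+ (nb u * nb t)%N) ^+ c :> algC.
  move=> t u k; case: (F2_cases t) => ->; case: (F2_cases u) => ->;
    rewrite /nb ?addr0 ?add0r ?F2_11 ?eqxx /= ?muln0 ?muln1 ?mul0n ?expr0 ?mul1r ?mulr1 ?expr1n //.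
  - by rewrite mulr1.
  - by rewrite mulr1.
  - by rewrite -exprD addnn -mul2n exprM sqrCi expr1 -expr2 sqrr_sign.
case: (F2_cases (m l)) => hm.
  apply: (good_ext IH) => y. by rewrite big_cons hm mul0r add0r.
have g1 := good_G2 l c.
have g2 := good_exp c (good_L1 m l r).
apply: (good_ext (good_mul (good_mul g1 IH) g2)) => y.
by rewrite big_cons hm mul1r split_id.
Qed.

Lemma good_Pcomp {n} (c : 'I_n -> 'I_4) (B : 'M['F_2]_n) :
  good (fun y : basis n => Pph c (B *m y)).
Proof.
apply: good_prod => j.
apply: (good_ext (good_L2 (fun l => B j l) (c j) (index_enum 'I_n))) => y.
by rewrite /bitn mxE.
Qed.

Lemma sum_indl {n} (w : basis n) (E : basis n -> algC) :
  \sum_(z : basis n) (z == w)%:R * E z = E w.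
Proof.
rewrite (bigD1 w) //= eqxx mul1r big1 ?addr0 // => z /negbTE ->.
by rewrite mul0r.
Qed.

Lemma sum_indr {n} (w : basis n) (E : basis n -> algC) :
  \sum_(z : basis n) (w == z)%:R * E z = E w.
Proof.
rewrite -[RHS](sum_indl w E); apply: eq_bigr => z _; by rewrite eq_sym.
Qed.

Lemma CZlayer_diag {n} (s : seq ('I_n * 'I_n)) (z w : basis n) :
  CZlayer s z w = (z == w)%:R * CZph s z.
Proof.
elim: s w => [|p s IH] w /=.
  by rewrite /qid /CZph big_nil mulr1.
rewrite /qmul /CZgate /CZph big_cons.
rewrite (eq_bigr (fun v => (z == v)%:R * ((-1) ^+ (bitn z p.1 * bitn z p.2)%N * CZlayer s v w))); last first.
  by move=> v _; rewrite mulrA.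
by rewrite sum_indr IH mulrCA.
Qed.

Lemma circ_form n m (L : nat -> 'I_n -> 'I_4) (A : nat -> 'M['F_2]_n)
    (hA : forall k : nat, (k < m)%N -> A k \in unitmx) k : (k <= m)%N ->
  exists (B : 'M['F_2]_n) (f : basis n -> algC), B \in unitmx /\ good f /\
    forall x y, PCcircuit L A k x y = (x == B *m y)%:R * f y.
Proof.
elim: k => [|k IH] hk.
  exists 1%:M, (fun _ => 1); split; first exact: unitmx1.
  split; first exact: good1.
  by move=> x y; rewrite /= /qid mul1mx mulr1.
have [B [f [hB [hf e]]]] := IH (ltnW hk).
exists (A k *m B), (fun y => Pph (L k) (B *m y) * f y); split.
  by rewrite unitmx_mul hA.
split; first exact: good_mul (good_Pcomp _ _) hf.
move=> x y /=; rewrite /qmul.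
rewrite (eq_bigr (fun z => (z == B *m y)%:R * ((x == A k *m z)%:R * (Pph (L k) z * f y)))).
  by rewrite sum_indl mulmxA mulrA.
move=> z _; rewrite /Clayer /Player.
rewrite (eq_bigr (fun w => (z == w)%:R * (Pph (L k) z * PCcircuit L A k w y))); last first.
  by move=> w _; rewrite /Pph mulrA.
rewrite sum_indr e /Pph.
ring.
Qed.

Theorem theorem1 (n m : nat) (hn : (1 <= n)%N) (hm : (1 <= m)%N)
    (L : nat -> 'I_n -> 'I_4) (A : nat -> 'M['F_2]_n)
    (hA : forall k : nat, (k < m)%N -> A k \in unitmx) :
  exists (a : 'I_n -> 'I_4) (s : seq ('I_n * 'I_n)) (A' : 'M['F_2]_n),
    A' \in unitmx /\ all (fun p => p.1 != p.2) s /\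
    forall x y : basis n,
      PCcircuit L A m x y
      = qmul (Clayer A') (qmul (CZlayer s) (Player a)) x y.
Proof.
have [B [f [hB [[a [s [hs ef]]] e]]]] := @circ_form n m L A hA m (leqnn m).
exists a, s, B; split => //; split => // x y.
rewrite e ef /qmul.
rewrite (eq_bigr (fun z => (z == y)%:R * ((x == B *m z)%:R * (CZph s z * Pph a z)))).
  by rewrite sum_indl; ring.
move=> z _; rewrite /Clayer.
rewrite (eq_bigr (fun w => (z == w)%:R * (CZph s z * Player a w y))); last first.
  by move=> w _; rewrite CZlayer_diag mulrA.
rewrite sum_indr /Player /Pph.
ring.
Qed.
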